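(* Let $(U_n)_{n\in\mathbb{Z}}$ be $2\times 2$ matrices with $U_n\in\mathcal{S}$ for all $n$, and let $N_0\ge 1$ be an integer with $U_n=I_2$ for all $|n|\ge N_0$. Let $\mathbb{S}_{\mathrm{QW}}=(s_{jk})_{j,k=1,2}$ be the scattering matrix of the associated quantum walk. For $j,k\in\{1,2\}$ let $G_{jk}$ be the set of finite walks $\gamma=(A_0,\dots,A_{L(\gamma)})$ on $\mathbb{Z}$ with $o(A_0)=(-1)^{k-1}N_0$ and $t(A_{L(\gamma)})=(-1)^jN_0$. Then $$ s_{jk}=(-1)^{j+k}\sum_{L=1}^{\infty}\ \sum_{\gamma\in G_{jk},\,L(\gamma)=L}\Phi(\gamma), $$ where for each positive integer $L$ the inner sum is a finite sum, and the series over $L$ converges absolutely.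
   Context: $\mathcal{S}:=\{M=(m_{jk})\in U(2): m_{11}=m_{22}\neq 0\}$. For each $n$ write $a_n,b_n,c_n$ for the $(1,1),(1,2),(2,1)$-entries of $U_n$, and set $P_n:=\begin{pmatrix}1&0\\0&0\end{pmatrix}U_n$, $Q_n:=\begin{pmatrix}0&0\\0&1\end{pmatrix}U_n$. The state space is $\mathcal{B}=\ell^\infty(\mathbb{Z};\mathbb{C}^2)$ of bounded sequences $\Psi=(\Psi(n))_{n\in\mathbb{Z}}$ of column vectors $\Psi(n)=(\Psi_1(n),\Psi_2(n))^T$, and the time evolution $\mathcal{U}:\mathcal{B}\to\mathcal{B}$ is $(\mathcal{U}\Psi)(n)=P_{n+1}\Psi(n+1)+Q_{n-1}\Psi(n-1)$. A state $\Psi$ is stationary if $\mathcal{U}\Psi=\Psi$; for every $n_1\in\mathbb{Z}$ and $v\in\mathbb{C}^2$ there is a unique stationary state with $\Psi(n_1)=v$. Let $\Psi_{\mathrm{in}}^\pm,\Psi_{\mathrm{out}}^\pm$ be the stationary states with $\Psi_{\mathrm{in}}^-(-N_0)=(0,1)^T$, $\Psi_{\mathrm{out}}^-(-N_0)=(1,0)^T$, $\Psi_{\mathrm{in}}^+(N_0)=(1,0)^T$, $\Psi_{\mathrm{out}}^+(N_0)=(0,1)^T$. The scattering matrix $\mathbb{S}_{\mathrm{QW}}$ is the $2\times2$ matrix with $(\Psi_{\mathrm{in}}^+,\Psi_{\mathrm{in}}^-)=(\Psi_{\mathrm{out}}^-,\Psi_{\mathrm{out}}^+)\,\mathbb{S}_{\mathrm{QW}}$.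 Regard $\mathbb{Z}$ as a directed graph with arcs $(n;R):=(n-1,n)$ and $(n;L):=(n+1,n)$, $n\in\mathbb{Z}$; for an arc $A=(u,v)$, $o(A)=u$ is its origin and $t(A)=v$ its terminus. A finite walk is a sequence of arcs $\gamma=(A_0,A_1,\dots,A_{L(\gamma)})$ with $o(A_l)=t(A_{l-1})$ for $1\le l\le L(\gamma)$; $L(\gamma)$ is its length. Its probability amplitude is $\Phi(\gamma):=\prod_{l=1}^{L(\gamma)}\Phi(A_{l-1},A_l)$, where, writing $m=o(A_l)$: $\Phi(A_{l-1},A_l)=a_m$ if $A_{l-1}=(m;L)$, $A_l=(m-1;L)$; $=b_m$ if $A_{l-1}=(m;R)$, $A_l=(m-1;L)$; $=c_m$ if $A_{l-1}=(m;L)$, $A_l=(m+1;R)$; $=a_m$ if $A_{l-1}=(m;R)$, $A_l=(m+1;R)$. *)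

(* Defs.v *)
From Stdlib Require Import Reals ZArith List.
From Coquelicot Require Export Coquelicot.
Import ListNotations.
Open Scope C_scope.

(* 2x2 complex matrices, entries indexed 1..2 (row, column);
   only indices in {1,2} are meaningful. *)
Definition mat2 := nat -> nat -> C.
Definition vec2 := (C * C)%type.

Definition inI2 (i : nat) : Prop := i = 1%nat \/ i = 2%nat.

Definition kron (i j : nat) : C := if Nat.eqb i j then 1 else 0.

Definition unitary2 (M : mat2) : Prop :=
  forall i j, inI2 i -> inI2 j ->
    M i 1%nat * Cconj (M j 1%nat) + M i 2%nat * Cconj (M j 2%nat) = kron i j.

Definition in_S (M : mat2) : Prop :=
  unitary2 M /\ M 1%nat 1%nat = M 2%nat 2%nat /\ M 1%nat 1%nat <> 0.

Definition is_id2 (M : mat2) : Prop :=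
  forall i j, inI2 i -> inI2 j -> M i j = kron i j.

Definition mulmv (M : mat2) (v : vec2) : vec2 :=
  (M 1%nat 1%nat * fst v + M 1%nat 2%nat * snd v,
   M 2%nat 1%nat * fst v + M 2%nat 2%nat * snd v).

Definition vadd (v w : vec2) : vec2 := (fst v + fst w, snd v + snd w).
Definition vscal (a : C) (v : vec2) : vec2 := (a * fst v, a * snd v).

Definition Pm (M : mat2) : mat2 := fun i j => if Nat.eqb i 1 then M i j else 0.
Definition Qm (M : mat2) : mat2 := fun i j => if Nat.eqb i 2 then M i j else 0.

Definition evol (U : Z -> mat2) (Psi : Z -> vec2) (n : Z) : vec2 :=
  vadd (mulmv (Pm (U (n + 1)%Z)) (Psi (n + 1)%Z))
       (mulmv (Qm (U (n - 1)%Z)) (Psi (n - 1)%Z)).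

Definition bounded_state (Psi : Z -> vec2) : Prop :=
  exists B : R, forall n, (Cmod (fst (Psi n)) <= B)%R /\ (Cmod (snd (Psi n)) <= B)%R.

Definition stationary (U : Z -> mat2) (Psi : Z -> vec2) : Prop :=
  bounded_state Psi /\ forall n, evol U Psi n = Psi n.

(* S is the scattering matrix: (Psi_in^+, Psi_in^-) = (Psi_out^-, Psi_out^+) S
   for the stationary states with the prescribed values at -N0 / N0. *)
Definition is_scattering_matrix (U : Z -> mat2) (N0 : Z) (S : mat2) : Prop :=
  exists Pin_p Pin_m Pout_p Pout_m : Z -> vec2,
    stationary U Pin_p /\ stationary U Pin_m /\
    stationary U Pout_p /\ stationary U Pout_m /\
    Pin_m (- N0)%Z = (RtoC 0, RtoC 1) /\ Pout_m (- N0)%Z = (RtoC 1, RtoC 0) /\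
    Pin_p N0 = (RtoC 1, RtoC 0) /\ Pout_p N0 = (RtoC 0, RtoC 1) /\
    (forall n, Pin_p n = vadd (vscal (S 1%nat 1%nat) (Pout_m n))
                              (vscal (S 2%nat 1%nat) (Pout_p n))) /\
    (forall n, Pin_m n = vadd (vscal (S 1%nat 2%nat) (Pout_m n))
                              (vscal (S 2%nat 2%nat) (Pout_p n))).

(* Arcs of Z as a directed graph: (n;R) = (n-1,n), (n;L) = (n+1,n). *)
Inductive dir := Rd | Ld.
Definition arc := (Z * dir)%type.

Definition origin (A : arc) : Z :=
  match snd A with Rd => (fst A - 1)%Z | Ld => (fst A + 1)%Z end.
Definition terminus (A : arc) : Z := fst A.

Fixpoint chain (g : list arc) : Prop :=
  match g with
  | A :: ((B :: _) as t) => origin B = terminus A /\ chain t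
  | _ => True
  end.

Definition is_walk (g : list arc) : Prop := g <> [] /\ chain g.

Definition walk_length (g : list arc) : nat := pred (length g).

(* Phi(A_{l-1}, A_l), with m = o(A_l); for consecutive arcs the four cases
   (m;L)->(m-1;L): a_m, (m;R)->(m-1;L): b_m, (m;L)->(m+1;R): c_m,
   (m;R)->(m+1;R): a_m exhaust all possibilities. *)
Definition Phi_step (U : Z -> mat2) (A B : arc) : C :=
  let m := origin B in
  match snd A, snd B with
  | Ld, Ld => U m 1%nat 1%nat
  | Rd, Ld => U m 1%nat 2%nat
  | Ld, Rd => U m 2%nat 1%nat
  | Rd, Rd => U m 1%nat 1%nat
  end.

Fixpoint Phi (U : Z -> mat2) (g : list arc) : C :=
  match g with
  | A :: ((B :: _) as t) => Phi_step U A B * Phi U t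
  | _ => 1
  end.

Definition in_G (N0 : Z) (j k : nat) (g : list arc) : Prop :=
  is_walk g /\
  origin (hd (0%Z, Rd) g) = ((-1) ^ (Z.of_nat k - 1) * N0)%Z /\
  terminus (last g (0%Z, Rd)) = ((-1) ^ (Z.of_nat j) * N0)%Z.

Definition Csum (l : list C) : C := fold_right Cplus 0 l.

(* Main.v *)
Require Import Defs.
From Stdlib Require Import Reals ZArith List.
From Coquelicot Require Import Coquelicot.
From Stdlib Require Import Lra Lia ClassicalEpsilon.
Import ListNotations.
Open Scope C_scope.

Open Scope C_scope.

Lemma Cis_series_lin (f g : nat -> C) (l1 l2 al be : C) :
  is_series f l1 -> is_series g l2 ->
  is_series (fun n => al * f n + be * g n) (al * l1 + be * l2).
Proof.
  intros H1 H2.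
  pose proof (@is_series_scal C_AbsRing C_NormedModule al f l1 H1) as H3.
  pose proof (@is_series_scal C_AbsRing C_NormedModule be g l2 H2) as H4.
  exact (@is_series_plus C_AbsRing C_NormedModule _ _ _ _ H3 H4).
Qed.

Lemma Cis_series_unique (f : nat -> C) (l1 l2 : C) :
  is_series f l1 -> is_series f l2 -> l1 = l2.
Proof.
  intros H1 H2. unfold is_series in *.
  exact (@filterlim_locally_unique nat C_AbsRing C_NormedModule eventually _ _ _ _ H1 H2).
Qed.

Lemma Cis_series_shift (f : nat -> C) (l : C) :
  is_series (fun n => f (S n)) l -> is_series f (f O + l).
Proof.
  intros H. apply (@is_series_decr_1 C_AbsRing C_NormedModule).
  match goal with |- is_series _ ?x => replace x with l; auto end.
  change (l = (f O + l) + - f O). ring.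
Qed.



Definition Cser (f : nat -> C) : C := epsilon (inhabits (0:C)) (fun l => is_series f l).

Lemma Cser_spec f : ex_series f -> is_series f (Cser f).
Proof. intros H. unfold Cser. apply epsilon_spec. exact H. Qed.

Lemma Cser_eq f l : is_series f l -> Cser f = l.
Proof. intros H. apply (Cis_series_unique f); auto. apply Cser_spec. exists l; auto. Qed.

Lemma Cex_series_abs (f : nat -> C) (b : nat -> R) :
  (forall n, Cmod (f n) <= b n)%R -> ex_series b -> ex_series f.
Proof.
  intros H Hb. apply (@ex_series_le C_AbsRing C_CompleteNormedModule f b); auto.
Qed.

Open Scope C_scope.

Definition sR (A : arc) : arc := ((terminus A + 1)%Z, Rd).
Definition sL (A : arc) : arc := ((terminus A - 1)%Z, Ld).
Definition pR (B : arc) : arc := (origin B, Rd).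
Definition pL (B : arc) : arc := (origin B, Ld).

Definition dir_eqb (d e : dir) : bool :=
  match d, e with Rd, Rd => true | Ld, Ld => true | _, _ => false end.
Definition arc_eqb (A B : arc) : bool := Z.eqb (fst A) (fst B) && dir_eqb (snd A) (snd B).

Lemma arc_eqb_spec A B : arc_eqb A B = true <-> A = B.
Proof.
  destruct A as [n d], B as [m e]; unfold arc_eqb; simpl. split; intros H.
  - apply Bool.andb_true_iff in H; destruct H as [H1 H2]; apply Z.eqb_eq in H1; subst.
    destruct d, e; simpl in H2; congruence.
  - inversion H; subst. apply Bool.andb_true_iff; split; [apply Z.eqb_refl | destruct e; reflexivity].
Qed.

Lemma origin_sR A : origin (sR A) = terminus A. Proof. unfold sR, origin; simpl; lia. Qed.
Lemma origin_sL A : origin (sL A) = terminus A. Proof. unfold sL, origin; simpl; lia. Qed.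

Lemma succ_cases A B : origin B = terminus A -> B = sR A \/ B = sL A.
Proof.
  destruct B as [m e]; unfold origin, sR, sL; simpl; destruct e; intros H.
  - left. f_equal. lia.
  - right. f_equal. lia.
Qed.

Fixpoint walks (A : arc) (L : nat) : list (list arc) :=
  match L with
  | O => [[A]]
  | S L' => map (cons A) (walks (sR A) L' ++ walks (sL A) L')
  end.

Lemma walks_spec A L g :
  In g (walks A L) <-> (hd_error g = Some A /\ chain g /\ length g = S L).
Proof.
  revert A g; induction L as [|L IH]; intros A g; simpl.
  - split.
    + intros [H|[]]; subst; simpl; auto.
    + intros [H1 [H2 H3]]. destruct g as [|x [|y g']]; simpl in *; try discriminate.
      inversion H1; subst; auto.
  - rewrite in_map_iff. split.
    + intros [g0 [Hg Hin]]; subst g. apply in_app_or in Hin.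
      destruct Hin as [Hin|Hin]; apply IH in Hin; destruct Hin as [H1 [H2 H3]];
      destruct g0 as [|y g1]; simpl in *; try discriminate; inversion H1; subst;
      repeat split; auto; [apply origin_sR | apply origin_sL].
    + intros [H1 [H2 H3]]. destruct g as [|x [|y g']]; simpl in *; try discriminate.
      inversion H1; subst x. exists (y :: g'). split; auto. apply in_or_app.
      destruct H2 as [H2 H2'].
      destruct (succ_cases A y H2) as [E|E]; subst y; [left|right]; apply IH; simpl; auto.
Qed.

Lemma walks_head A L g : In g (walks A L) -> exists g', g = A :: g'.
Proof.
  intros H. apply walks_spec in H. destruct H as [H _].
  destruct g; simpl in H; try discriminate. inversion H; subst; eauto.
Qed.

Lemma sR_sL_neq A : sR A <> sL A.
Proof. unfold sR, sL; intros H; inversion H. Qed.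

Lemma walks_NoDup A L : NoDup (walks A L).
Proof.
  revert A; induction L as [|L IH]; intros A; simpl.
  - constructor; auto. constructor.
  - apply NoDup_map_NoDup_ForallPairs.
    + intros x y _ _ H; inversion H; auto.
    + apply NoDup_app; auto.
      intros g H1 H2. apply walks_head in H1. apply walks_head in H2.
      destruct H1 as [g1 E1], H2 as [g2 E2]. subst. inversion E2.
Qed.

Lemma Csum_map_scal (f : list arc -> C) (c : C) (l : list (list arc)) :
  Csum (map (fun g => c * f g) l) = c * Csum (map f l).
Proof. induction l; simpl; [ring | rewrite IHl; ring]. Qed.

Lemma Csum_app l1 l2 : Csum (l1 ++ l2) = Csum l1 + Csum l2.
Proof. induction l1; simpl; [ring | rewrite IHl1; ring]. Qed.

Definition endq (q : Z) (g : list arc) : bool := Z.eqb (terminus (last g (0%Z, Rd))) q.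

Fixpoint u (U : Z -> mat2) (L : nat) (A : arc) (q : Z) : C :=
  match L with
  | O => if Z.eqb (terminus A) q then 1 else 0
  | S L' => Phi_step U A (sR A) * u U L' (sR A) q + Phi_step U A (sL A) * u U L' (sL A) q
  end.

Lemma filter_cons_gen U A B q (l : list (list arc)) :
  (forall g, In g l -> exists g', g = B :: g') ->
  Csum (map (Phi U) (filter (endq q) (map (cons A) l))) =
  Phi_step U A B * Csum (map (Phi U) (filter (endq q) l)).
Proof.
  induction l as [|g l IHl]; intros H; simpl; [ring|].
  destruct (H g (or_introl eq_refl)) as [g' E]; subst g.
  assert (Hend : endq q (A :: B :: g') = endq q (B :: g')) by reflexivity.
  rewrite Hend.
  destruct (endq q (B :: g')); simpl; rewrite IHl by (intros; apply H; right; auto); simpl; ring.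
Qed.

Lemma filter_cons_walks U A B L q :
  Csum (map (Phi U) (filter (endq q) (map (cons A) (walks B L)))) =
  Phi_step U A B * Csum (map (Phi U) (filter (endq q) (walks B L))).
Proof. apply filter_cons_gen. intros; eapply walks_head; eauto. Qed.

Lemma walks_sum U A L q :
  Csum (map (Phi U) (filter (endq q) (walks A L))) = u U L A q.
Proof.
  revert A; induction L as [|L IH]; intros A.
  - simpl. unfold endq, terminus; simpl. destruct (Z.eqb (fst A) q); simpl; [ring | reflexivity].
  - simpl. rewrite map_app, filter_app, map_app, Csum_app.
    rewrite !filter_cons_walks, !IH. reflexivity.
Qed.

Open Scope C_scope.

Fixpoint v (U : Z -> mat2) (L : nat) (A B : arc) : C :=
  match L with
  | O => if arc_eqb A B then 1 else 0
  | S L' => Phi_step U A (sR A) * v U L' (sR A) B + Phi_step U A (sL A) * v U L' (sL A) B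
  end.

Lemma v_back0 U A B :
  v U 1 A B = v U 0 A (pR B) * Phi_step U (pR B) B + v U 0 A (pL B) * Phi_step U (pL B) B.
Proof.
  destruct A as [n d], B as [m e].
  unfold v, arc_eqb, sR, sL, pR, pL, Phi_step, origin, terminus; simpl.
  destruct d, e; simpl; rewrite ?Bool.andb_true_r, ?Bool.andb_false_r;
  repeat match goal with |- context [Z.eqb ?x ?y] => destruct (Z.eqb_spec x y) end;
  simpl; try lia; subst;
  try (replace (n + 1 - 1)%Z with n by lia); try (replace (n - 1 + 1)%Z with n by lia);
  try (replace (m - 1 + 1)%Z with m by lia); try (replace (m + 1 - 1)%Z with m by lia);
  try ring.
Qed.

Lemma v_back U L A B :
  v U (S L) A B = v U L A (pR B) * Phi_step U (pR B) B + v U L A (pL B) * Phi_step U (pL B) B.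
Proof.
  revert A; induction L as [|L IH]; intros A.
  - apply v_back0.
  - change (v U (S (S L)) A B) with
      (Phi_step U A (sR A) * v U (S L) (sR A) B + Phi_step U A (sL A) * v U (S L) (sL A) B).
    rewrite !IH. simpl. ring.
Qed.

Lemma u_v U L A q : u U L A q = v U L A (q, Rd) + v U L A (q, Ld).
Proof.
  revert A; induction L as [|L IH]; intros A.
  - destruct A as [n d]; unfold u, v, arc_eqb, terminus; simpl.
    destruct (Z.eqb_spec n q); destruct d; simpl; ring.
  - simpl. rewrite !IH. ring.
Qed.

Definition stR (p : Z) : arc := ((p + 1)%Z, Rd).
Definition stL (p : Z) : arc := ((p - 1)%Z, Ld).

Definition Fw U p L B := v U L (stR p) B + v U L (stL p) B.
Definition Xf U p L n := Fw U p L (n, Ld).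
Definition Yf U p L n := Fw U p L (n, Rd).

Definition ca (U : Z -> mat2) m := U m 1%nat 1%nat.
Definition cb (U : Z -> mat2) m := U m 1%nat 2%nat.
Definition cc (U : Z -> mat2) m := U m 2%nat 1%nat.

Lemma Xf_S U p L n :
  Xf U p (S L) n = ca U (n+1) * Xf U p L (n+1) + cb U (n+1) * Yf U p L (n+1).
Proof.
  unfold Xf, Yf, Fw. rewrite !v_back. unfold pR, pL, Phi_step, origin, ca, cb; simpl. ring.
Qed.

Lemma Yf_S U p L n :
  Yf U p (S L) n = cc U (n-1) * Xf U p L (n-1) + ca U (n-1) * Yf U p L (n-1).
Proof.
  unfold Xf, Yf, Fw. rewrite !v_back. unfold pR, pL, Phi_step, origin, ca, cc; simpl. ring.
Qed.

Lemma Xf_0 U p n : Xf U p 0 n = if Z.eqb n (p - 1) then 1 else 0.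
Proof.
  unfold Xf, Fw, stR, stL; simpl. unfold arc_eqb; simpl.
  rewrite Bool.andb_true_r, Bool.andb_false_r.
  destruct (Z.eqb_spec (p-1) n); destruct (Z.eqb_spec n (p-1)); try lia; ring.
Qed.

Lemma Yf_0 U p n : Yf U p 0 n = if Z.eqb n (p + 1) then 1 else 0.
Proof.
  unfold Yf, Fw, stR, stL; simpl. unfold arc_eqb; simpl.
  rewrite Bool.andb_true_r, Bool.andb_false_r.
  destruct (Z.eqb_spec (p+1) n); destruct (Z.eqb_spec n (p+1)); try lia; ring.
Qed.

Definition wlist (p q : Z) (L : nat) : list (list arc) :=
  filter (endq q) (walks (stR p) L ++ walks (stL p) L).

Lemma wlist_sum U p q L : Csum (map (Phi U) (wlist p q L)) = Xf U p L q + Yf U p L q.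
Proof.
  unfold wlist. rewrite filter_app, map_app, Csum_app, !walks_sum, !u_v.
  unfold Xf, Yf, Fw. ring.
Qed.

Lemma wlist_NoDup p q L : NoDup (wlist p q L).
Proof.
  unfold wlist. apply NoDup_filter. apply NoDup_app; try apply walks_NoDup.
  intros g H1 H2. apply walks_head in H1. apply walks_head in H2.
  destruct H1 as [g1 E1], H2 as [g2 E2]. subst. inversion E2.
Qed.

Lemma wlist_spec p q L g :
  In g (wlist p q L) <->
  ((is_walk g /\ origin (hd (0%Z, Rd) g) = p /\ terminus (last g (0%Z, Rd)) = q)
   /\ walk_length g = L).
Proof.
  unfold wlist. rewrite filter_In, in_app_iff, !walks_spec. unfold endq, is_walk, walk_length.
  rewrite Z.eqb_eq. split.
  - intros [H Hq]. destruct H as [[H1 [H2 H3]] | [H1 [H2 H3]]];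
    (destruct g as [|A g]; simpl in H1; [discriminate|]; inversion H1; subst A);
    repeat split; auto; try discriminate; simpl; try (rewrite H3; reflexivity);
    unfold origin, stR, stL; simpl; lia.
  - intros [[[Hne Hc] [Ho Ht]] Hl]. split; auto.
    destruct g as [|A g]; [congruence|]. simpl in Ho, Hl.
    destruct A as [m e]; unfold origin in Ho; simpl in Ho.
    destruct e; [left|right]; (split; [simpl; f_equal; unfold stR, stL; f_equal; lia|]);
    split; auto; simpl; lia.
Qed.

Open Scope C_scope.

Definition goodU (U : Z -> mat2) (N0 : Z) : Prop :=
  (forall n, in_S (U n)) /\ (1 <= N0)%Z /\ (forall n, (N0 <= Z.abs n)%Z -> is_id2 (U n)).

Lemma inI2_1 : inI2 1. Proof. left; auto. Qed.
Lemma inI2_2 : inI2 2. Proof. right; auto. Qed.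

Lemma id_coefs U N0 m : goodU U N0 -> (N0 <= Z.abs m)%Z ->
  ca U m = 1 /\ cb U m = 0 /\ cc U m = 0.
Proof.
  intros [_ [_ H]] Hm. specialize (H m Hm). unfold ca, cb, cc.
  rewrite (H 1%nat 1%nat inI2_1 inI2_1), (H 1%nat 2%nat inI2_1 inI2_2), (H 2%nat 1%nat inI2_2 inI2_1).
  unfold kron; simpl. auto.
Qed.

Lemma unit_coefs U N0 m : goodU U N0 ->
  ca U m * Cconj (ca U m) + cb U m * Cconj (cb U m) = 1 /\
  cc U m * Cconj (cc U m) + ca U m * Cconj (ca U m) = 1 /\
  ca U m * Cconj (cc U m) + cb U m * Cconj (ca U m) = 0 /\
  U m 2%nat 2%nat = ca U m /\ ca U m <> 0.
Proof.
  intros [H _]. destruct (H m) as [Hu [Hd Hn]]. unfold ca, cb, cc.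
  pose proof (Hu 1%nat 1%nat inI2_1 inI2_1) as E11.
  pose proof (Hu 2%nat 2%nat inI2_2 inI2_2) as E22.
  pose proof (Hu 1%nat 2%nat inI2_1 inI2_2) as E12.
  unfold kron in *; simpl in *. rewrite <- Hd in E22, E12.
  repeat split; auto.
Qed.

Lemma C_to_R_eq (x y : R) : RtoC x = RtoC y -> x = y.
Proof. intros H. apply (f_equal fst) in H. simpl in H. auto. Qed.

Lemma site_energy U N0 m x y : goodU U N0 ->
  (Cmod (ca U m * x + cb U m * y) ^ 2 + Cmod (cc U m * x + ca U m * y) ^ 2 =
   Cmod x ^ 2 + Cmod y ^ 2)%R.
Proof.
  intros G. destruct (unit_coefs U N0 m G) as [E1 [E2 [E3 _]]].
  apply C_to_R_eq. rewrite !RtoC_plus, !Cmod2_conj, !Cplus_conj, !Cmult_conj.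
  set (a := ca U m) in *; set (b := cb U m) in *; set (c := cc U m) in *.
  assert (E4 : Cconj a * c + Cconj b * a = 0).
  { apply (f_equal Cconj) in E3. rewrite Cplus_conj, !Cmult_conj, !Cconj_conj in E3.
    rewrite E3. unfold Cconj, RtoC; simpl; f_equal; ring. }
  transitivity (x * Cconj x + y * Cconj y + (a * Cconj a + c * Cconj c - 1) * (x * Cconj x)
     + (a * Cconj a + b * Cconj b - 1) * (y * Cconj y) + (Cconj a * c + Cconj b * a) * (x * Cconj y)
     + (a * Cconj c + b * Cconj a) * (y * Cconj x)).
  - ring.
  - rewrite E3, E4. replace (a * Cconj a + c * Cconj c - 1) with (0:C) by (rewrite <- E2; ring).
    replace (a * Cconj a + b * Cconj b - 1) with (0:C) by (rewrite <- E1; ring). ring.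
Qed.

Lemma coef_bounds U N0 m : goodU U N0 ->
  (Cmod (ca U m) <= 1 /\ Cmod (cb U m) <= 1 /\ Cmod (cc U m) <= 1 /\ 0 < Cmod (ca U m))%R.
Proof.
  intros G. destruct (unit_coefs U N0 m G) as [E1 [E2 [_ [_ Hn]]]].
  assert (R1 : (Cmod (ca U m) ^ 2 + Cmod (cb U m) ^ 2 = 1)%R).
  { apply C_to_R_eq. rewrite RtoC_plus, !Cmod2_conj. exact E1. }
  assert (R2 : (Cmod (cc U m) ^ 2 + Cmod (ca U m) ^ 2 = 1)%R).
  { apply C_to_R_eq. rewrite RtoC_plus, !Cmod2_conj. exact E2. }
  pose proof (Cmod_ge_0 (ca U m)). pose proof (Cmod_ge_0 (cb U m)). pose proof (Cmod_ge_0 (cc U m)).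
  apply Cmod_gt_0 in Hn.
  repeat split; try nra.
Qed.

Open Scope R_scope.

Fixpoint sumZ (f : Z -> R) (lo : Z) (k : nat) : R :=
  match k with
  | O => 0
  | S k' => f lo + sumZ f (lo + 1)%Z k'
  end.

Lemma sumZ_last f lo k : sumZ f lo (S k) = sumZ f lo k + f (lo + Z.of_nat k)%Z.
Proof.
  revert lo; induction k as [|k IH]; intros lo.
  - simpl. replace (lo + 0)%Z with lo by lia. ring.
  - change (sumZ f lo (S (S k))) with (f lo + sumZ f (lo + 1)%Z (S k)).
    rewrite IH. simpl. replace (lo + 1 + Z.of_nat k)%Z with (lo + Z.pos (Pos.of_succ_nat k))%Z by lia.
    ring.
Qed.

Lemma sumZ_ext f g lo k : (forall i, (i < k)%nat -> f (lo + Z.of_nat i)%Z = g (lo + Z.of_nat i)%Z) ->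
  sumZ f lo k = sumZ g lo k.
Proof.
  revert lo; induction k as [|k IH]; intros lo H; simpl; auto.
  f_equal.
  - specialize (H O ltac:(lia)). replace (lo + Z.of_nat 0)%Z with lo in H by lia. auto.
  - apply IH. intros i Hi. specialize (H (S i) ltac:(lia)).
    replace (lo + 1 + Z.of_nat i)%Z with (lo + Z.of_nat (S i))%Z by lia. auto.
Qed.

Lemma sumZ_plus f g lo k : sumZ (fun m => f m + g m) lo k = sumZ f lo k + sumZ g lo k.
Proof. revert lo; induction k; intros lo; simpl; [ring | rewrite IHk; ring]. Qed.

Lemma sumZ_shift f s lo k : sumZ (fun m => f (m + s)%Z) lo k = sumZ f (lo + s)%Z k.
Proof.
  revert lo; induction k; intros lo; simpl; auto. rewrite IHk.
  replace (lo + 1 + s)%Z with (lo + s + 1)%Z by lia. auto.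
Qed.

Lemma sumZ_le_const f lo k c : (forall i, (i < k)%nat -> f (lo + Z.of_nat i)%Z <= c) ->
  sumZ f lo k <= INR k * c.
Proof.
  revert lo; induction k as [|k IH]; intros lo H.
  - simpl; lra.
  - rewrite S_INR. cbn [sumZ]. assert (H0 := H O ltac:(lia)). replace (lo + Z.of_nat 0)%Z with lo in H0 by lia.
    assert (H1 : sumZ f (lo + 1) k <= INR k * c).
    { apply IH. intros i Hi. specialize (H (S i) ltac:(lia)).
      replace (lo + 1 + Z.of_nat i)%Z with (lo + Z.of_nat (S i))%Z by lia. auto. }
    lra.
Qed.

Lemma sumZ_nonneg f lo k : (forall m, 0 <= f m) -> 0 <= sumZ f lo k.
Proof. revert lo; induction k; intros lo H; simpl; [lra|]. specialize (IHk (lo+1)%Z H). specialize (H lo). lra. Qed.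

Lemma sumZ_term f lo k i : (forall m, 0 <= f m) -> (i < k)%nat -> f (lo + Z.of_nat i)%Z <= sumZ f lo k.
Proof.
  revert lo i; induction k as [|k IH]; intros lo i H Hi; [lia|]. simpl.
  destruct i as [|i].
  - replace (lo + Z.of_nat 0)%Z with lo by lia. pose proof (sumZ_nonneg f (lo+1) k H). lra.
  - replace (lo + Z.of_nat (S i))%Z with (lo + 1 + Z.of_nat i)%Z by lia.
    specialize (IH (lo+1)%Z i H ltac:(lia)). specialize (H lo). lra.
Qed.

Lemma X_vanish U N0 p L n : goodU U N0 -> (-N0 <= p <= N0)%Z -> (N0 <= n)%Z -> Xf U p L n = 0%C.
Proof.
  intros G Hp. revert n; induction L as [|L IH]; intros n Hn.
  - rewrite Xf_0. destruct (Z.eqb_spec n (p-1)); [lia|auto].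
  - rewrite Xf_S. rewrite IH by lia.
    destruct (id_coefs U N0 (n+1) G ltac:(lia)) as [_ [Hb _]]. rewrite Hb. ring.
Qed.

Lemma Y_vanish U N0 p L n : goodU U N0 -> (-N0 <= p <= N0)%Z -> (n <= -N0)%Z -> Yf U p L n = 0%C.
Proof.
  intros G Hp. revert n; induction L as [|L IH]; intros n Hn.
  - rewrite Yf_0. destruct (Z.eqb_spec n (p+1)); [lia|auto].
  - rewrite Yf_S. rewrite IH by lia.
    destruct (id_coefs U N0 (n-1) G ltac:(lia)) as [_ [_ Hc]]. rewrite Hc. ring.
Qed.

Definition cntN (N0 : Z) : nat := Z.to_nat (2 * N0 - 1).

Definition En U N0 p L : R :=
  sumZ (fun m => Cmod (Xf U p L m) ^ 2 + Cmod (Yf U p L m) ^ 2) (-N0 + 1) (cntN N0).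

Lemma En_nonneg U N0 p L : 0 <= En U N0 p L.
Proof. apply sumZ_nonneg. intros m. pose proof (pow2_ge_0 (Cmod (Xf U p L m))). pose proof (pow2_ge_0 (Cmod (Yf U p L m))). lra. Qed.

Lemma sumZ_down g lo k : sumZ (fun m => g (m - 1)%Z) lo k = g (lo - 1)%Z + sumZ g lo k - g (lo - 1 + Z.of_nat k)%Z.
Proof.
  rewrite (sumZ_shift g (-1)). replace (lo + -1)%Z with (lo - 1)%Z by lia.
  pose proof (sumZ_last g (lo-1) k) as H. cbn [sumZ] in H. replace (lo - 1 + 1)%Z with lo in H by lia.
  lra.
Qed.

Lemma sumZ_up g lo k : sumZ (fun m => g (m + 1)%Z) lo k = sumZ g lo k + g (lo + Z.of_nat k)%Z - g lo.
Proof.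
  rewrite (sumZ_shift g 1).
  pose proof (sumZ_last g lo k) as H. cbn [sumZ] in H. lra.
Qed.

Lemma En_step U N0 p L : goodU U N0 -> (-N0 <= p <= N0)%Z ->
  En U N0 p L = En U N0 p (S L) + Cmod (Xf U p (S L) (-N0)) ^ 2 + Cmod (Yf U p (S L) N0) ^ 2.
Proof.
  intros G Hp. pose proof G as [_ [HN _]]. unfold En.
  rewrite (sumZ_ext _ (fun m => Cmod (Xf U p (S L) (m - 1)) ^ 2 + Cmod (Yf U p (S L) (m + 1)) ^ 2)).
  2:{ intros i _. rewrite Xf_S, Yf_S. replace (-N0 + 1 + Z.of_nat i - 1 + 1)%Z with (-N0 + 1 + Z.of_nat i)%Z by lia.
      replace (-N0 + 1 + Z.of_nat i + 1 - 1)%Z with (-N0 + 1 + Z.of_nat i)%Z by lia.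
      rewrite site_energy with (N0 := N0); auto. }
  rewrite !sumZ_plus.
  rewrite (sumZ_down (fun m => Cmod (Xf U p (S L) m) ^ 2)).
  rewrite (sumZ_up (fun m => Cmod (Yf U p (S L) m) ^ 2)).
  unfold cntN. rewrite Z2Nat.id by lia.
  replace (-N0 + 1 - 1 + (2 * N0 - 1))%Z with (N0 - 1)%Z by lia.
  replace (-N0 + 1 + (2 * N0 - 1))%Z with N0 by lia.
  replace (-N0 + 1 - 1)%Z with (-N0)%Z by lia.
  assert (H1 : Xf U p (S L) (N0 - 1) = 0%C).
  { rewrite Xf_S. replace (N0 - 1 + 1)%Z with N0 by lia.
    rewrite (X_vanish U N0 p L N0) by (auto; lia).
    destruct (id_coefs U N0 N0 G ltac:(lia)) as [_ [Hb _]]. rewrite Hb. ring. }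
  assert (H2 : Yf U p (S L) (-N0 + 1) = 0%C).
  { rewrite Yf_S. replace (-N0 + 1 - 1)%Z with (-N0)%Z by lia.
    rewrite (Y_vanish U N0 p L (-N0)) by (auto; lia).
    destruct (id_coefs U N0 (-N0) G ltac:(lia)) as [_ [_ Hc]]. rewrite Hc. ring. }
  rewrite H1, H2, Cmod_0. ring.
Qed.

Lemma leak_eq U N0 p L : goodU U N0 -> (-N0 <= p <= N0)%Z ->
  Cmod (Xf U p (S L) (-N0)) ^ 2 + Cmod (Yf U p (S L) N0) ^ 2 = En U N0 p L - En U N0 p (S L).
Proof. intros G Hp. rewrite (En_step U N0 p L G Hp). ring. Qed.

Lemma En_mono U N0 p L1 L2 : goodU U N0 -> (-N0 <= p <= N0)%Z -> (L1 <= L2)%nat ->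
  En U N0 p L2 <= En U N0 p L1.
Proof.
  intros G Hp H. induction H; [lra|].
  rewrite (En_step U N0 p m G Hp) in IHle.
  pose proof (pow2_ge_0 (Cmod (Xf U p (S m) (-N0)))). pose proof (pow2_ge_0 (Cmod (Yf U p (S m) N0))). lra.
Qed.

Lemma Y_first0 U N0 p L : goodU U N0 -> (-N0 <= p <= N0)%Z -> Yf U p (S L) (-N0 + 1) = 0%C.
Proof.
  intros G Hp. pose proof G as [_ [HN _]].
  rewrite Yf_S. replace (-N0 + 1 - 1)%Z with (-N0)%Z by lia.
  rewrite (Y_vanish U N0 p L (-N0)) by (auto; lia).
  destruct (id_coefs U N0 (-N0) G ltac:(lia)) as [_ [_ Hc]]. rewrite Hc. ring.
Qed.

Lemma alpha_exists U N0 lo k : goodU U N0 ->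
  exists al, 0 < al <= 1 /\ forall i, (i < k)%nat -> al <= Cmod (ca U (lo + Z.of_nat i)%Z).
Proof.
  intros G. induction k as [|k IH].
  - exists 1. split; [lra|]. intros; lia.
  - destruct IH as [al [Hal Hi]].
    destruct (coef_bounds U N0 (lo + Z.of_nat k)%Z G) as [_ [_ [_ Hp]]].
    exists (Rmin al (Cmod (ca U (lo + Z.of_nat k)%Z))). split.
    + split; [apply Rmin_glb_lt; lra | pose proof (Rmin_l al (Cmod (ca U (lo + Z.of_nat k)))); lra].
    + intros i Hik. destruct (Nat.eq_dec i k) as [->|Hne].
      * apply Rmin_r.
      * pose proof (Rmin_l al (Cmod (ca U (lo + Z.of_nat i)%Z))). specialize (Hi i ltac:(lia)).
        pose proof (Rmin_l al (Cmod (ca U (lo + Z.of_nat k)))). lra.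
Qed.

Lemma Cmod_lin_bound (a b x y : C) (Ma Mb Mx My : R) :
  Cmod a <= Ma -> Cmod b <= Mb -> Cmod x <= Mx -> Cmod y <= My ->
  Cmod (a * x + b * y) <= Ma * Mx + Mb * My.
Proof.
  intros. eapply Rle_trans; [apply Cmod_triangle|]. rewrite !Cmod_mult.
  pose proof (Cmod_ge_0 a). pose proof (Cmod_ge_0 b). pose proof (Cmod_ge_0 x). pose proof (Cmod_ge_0 y).
  apply Rplus_le_compat; apply Rmult_le_compat; auto.
Qed.

Lemma reconstruct U N0 p T M al lam : goodU U N0 -> (-N0 <= p <= N0)%Z ->
  0 < al <= 1 -> (forall i, (i < cntN N0)%nat -> al <= Cmod (ca U (-N0 + 1 + Z.of_nat i)%Z)) ->
  0 <= lam ->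
  (forall L, (T + 1 <= L)%nat -> (L <= T + M)%nat -> Cmod (Xf U p L (-N0)) <= lam) ->
  forall i, (i <= cntN N0)%nat ->
  forall L, (T + 1 + i <= L)%nat -> (L + i <= T + M)%nat ->
  Cmod (Xf U p L (-N0 + Z.of_nat i)) <= (3 / al) ^ i * lam /\
  Cmod (Yf U p L (-N0 + 1 + Z.of_nat i)) <= (3 / al) ^ i * lam.
Proof.
  intros G Hp Hal Hai Hlam HL. pose proof G as [_ [HN _]].
  assert (HR : 1 <= 3 / al).
  { apply (Rmult_le_reg_r al); [lra|]. unfold Rdiv. rewrite Rmult_assoc, Rinv_l by lra. lra. }
  induction i as [|i IH]; intros Hi L H1 H2.
  - simpl. rewrite Rmult_1_l. rewrite !Z.add_0_r. split.
    + apply HL; lia.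
    + destruct L as [|L]; [lia|]. rewrite Y_first0 by auto. rewrite Cmod_0. lra.
  - set (m := (-N0 + 1 + Z.of_nat i)%Z).
    assert (Hm : al <= Cmod (ca U m)) by (apply Hai; lia).
    destruct (coef_bounds U N0 m G) as [Ba [Bb [Bc Bp]]].
    assert (Rpos : 0 <= (3 / al) ^ i * lam).
    { apply Rmult_le_pos; auto. apply pow_le. lra. }
    assert (XB : forall L', (T + 1 + i <= L')%nat -> (L' + 1 + i <= T + M)%nat ->
               Cmod (Xf U p L' m) <= 2 * ((3 / al) ^ i * lam) / al).
    { intros L' H1' H2'.
      destruct (IH ltac:(lia) (S L') ltac:(lia) ltac:(lia)) as [HX _].
      destruct (IH ltac:(lia) L' ltac:(lia) ltac:(lia)) as [_ HY].
      rewrite Xf_S in HX. replace (-N0 + Z.of_nat i + 1)%Z with m in HX by (unfold m; lia).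
      fold m in HY.
      assert (E : Xf U p L' m = (((Xf U p (S L') (-N0 + Z.of_nat i)) - cb U m * Yf U p L' m) / ca U m)%C).
      { rewrite Xf_S. replace (-N0 + Z.of_nat i + 1)%Z with m by (unfold m; lia).
        field. apply (unit_coefs U N0 m G). }
      rewrite E. rewrite Cmod_div by (apply (unit_coefs U N0 m G)).
      assert (B : Cmod (Xf U p (S L') (-N0 + Z.of_nat i) - cb U m * Yf U p L' m) <= 2 * ((3 / al) ^ i * lam)).
      { unfold Cminus. eapply Rle_trans; [apply Cmod_triangle|]. rewrite Cmod_opp, Cmod_mult.
        rewrite Xf_S. replace (-N0 + Z.of_nat i + 1)%Z with m by (unfold m; lia).
        pose proof (Cmod_ge_0 (Yf U p L' m)).
        assert (Cmod (cb U m) * Cmod (Yf U p L' m) <= (3 / al) ^ i * lam).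
        { apply Rle_trans with (1 * Cmod (Yf U p L' m)); [apply Rmult_le_compat_r; lra | lra]. }
        lra. }
      unfold Rdiv. apply Rmult_le_compat; [apply Cmod_ge_0 | left; apply Rinv_0_lt_compat; lra | exact B |].
      apply Rinv_le_contravar; lra. }
    assert (K2 : 2 * ((3 / al) ^ i * lam) / al <= (3 / al) ^ S i * lam).
    { simpl. unfold Rdiv. 
      replace (3 * / al * (3 * / al) ^ i * lam) with (3 * ((3 * / al) ^ i * lam) * / al) by ring.
      apply Rmult_le_compat_r; [left; apply Rinv_0_lt_compat; lra|]. unfold Rdiv in Rpos. lra. }
    split.
    + replace (-N0 + Z.of_nat (S i))%Z with m by (unfold m; lia).
      eapply Rle_trans; [apply XB; lia | exact K2].
    + destruct L as [|L']; [lia|].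
      rewrite Yf_S. replace (-N0 + 1 + Z.of_nat (S i) - 1)%Z with m by (unfold m; lia).
      destruct (IH ltac:(lia) L' ltac:(lia) ltac:(lia)) as [_ HY]. fold m in HY.
      pose proof (XB L' ltac:(lia) ltac:(lia)) as HX.
      eapply Rle_trans; [apply (Cmod_lin_bound _ _ _ _ 1 1 _ _ Bc Ba HX HY)|].
      simpl. unfold Rdiv. unfold Rdiv in Rpos.
      assert (Hinv : 1 <= / al).
      { apply (Rmult_le_reg_l al); [lra|]. rewrite Rinv_r by lra. lra. }
      assert (0 <= (3 * / al) ^ i * lam) by exact Rpos.
      replace (3 * / al * (3 * / al) ^ i * lam) with (3 * ((3 * / al) ^ i * lam) * / al) by ring.
      nra.
Qed.

Lemma leak_X_le U N0 p L : goodU U N0 -> (-N0 <= p <= N0)%Z ->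
  Cmod (Xf U p (S L) (-N0)) ^ 2 <= En U N0 p L - En U N0 p (S L).
Proof. intros G Hp. rewrite <- leak_eq by auto. pose proof (pow2_ge_0 (Cmod (Yf U p (S L) N0))). lra. Qed.

Lemma leak_Y_le U N0 p L : goodU U N0 -> (-N0 <= p <= N0)%Z ->
  Cmod (Yf U p (S L) N0) ^ 2 <= En U N0 p L - En U N0 p (S L).
Proof. intros G Hp. rewrite <- leak_eq by auto. pose proof (pow2_ge_0 (Cmod (Xf U p (S L) (-N0)))). lra. Qed.

Lemma le_sqrt_of_sq (x y : R) : 0 <= x -> x ^ 2 <= y -> x <= sqrt y.
Proof. intros H1 H2. rewrite <- (sqrt_pow2 x H1). apply sqrt_le_1_alt. auto. Qed.

Lemma decay U N0 p : goodU U N0 -> (-N0 <= p <= N0)%Z ->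
  exists M q, (0 < M)%nat /\ 0 < q < 1 /\ forall T, En U N0 p (T + M) <= q * En U N0 p T.
Proof.
  intros G Hp. pose proof G as [_ [HN _]].
  set (cnt := cntN N0).
  assert (Hcnt : (1 <= cnt)%nat) by (unfold cnt, cntN; lia).
  destruct (alpha_exists U N0 (-N0 + 1) cnt G) as [al [Hal Hai]].
  set (R := 3 / al).
  assert (HR : 1 <= R).
  { unfold R. apply (Rmult_le_reg_r al); [lra|]. unfold Rdiv. rewrite Rmult_assoc, Rinv_l by lra. lra. }
  set (Cst := INR cnt * (2 * (R ^ cnt) ^ 2)).
  assert (HRc : 1 <= R ^ cnt) by (rewrite <- (pow1 cnt); apply pow_incr; lra).
  assert (HC : 0 < Cst).
  { unfold Cst. apply Rmult_lt_0_compat. apply lt_0_INR; lia. nra. }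
  exists (2 * cnt + 2)%nat, (Cst / (1 + Cst)). split; [lia|]. split.
  { split. apply Rdiv_lt_0_compat; lra. apply (Rmult_lt_reg_r (1 + Cst)); [lra|].
    unfold Rdiv. rewrite Rmult_assoc, Rinv_l by lra. lra. }
  intros T. set (M := (2 * cnt + 2)%nat).
  set (lam := sqrt (En U N0 p T - En U N0 p (T + M))).
  assert (Hmono : En U N0 p (T + M) <= En U N0 p T) by (apply En_mono; auto; lia).
  assert (Hlam : 0 <= lam) by apply sqrt_pos.
  assert (HL : forall L, (T + 1 <= L)%nat -> (L <= T + M)%nat -> Cmod (Xf U p L (-N0)) <= lam).
  { intros L H1 H2. destruct L as [|L0]; [lia|].
    apply le_sqrt_of_sq; [apply Cmod_ge_0|].
    eapply Rle_trans; [apply leak_X_le; auto|].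
    assert (En U N0 p L0 <= En U N0 p T) by (apply En_mono; auto; lia).
    assert (En U N0 p (T + M) <= En U N0 p (S L0)) by (apply En_mono; auto; lia).
    lra. }
  assert (Hrec := reconstruct U N0 p T M al lam G Hp Hal Hai Hlam HL).
  set (T' := (T + cnt + 1)%nat).
  assert (HE' : En U N0 p T' <= Cst * lam ^ 2).
  { unfold En. fold cnt. unfold Cst. rewrite Rmult_assoc.
    apply sumZ_le_const. intros i Hi.
    destruct (Hrec i ltac:(unfold cnt in Hi; lia) T' ltac:(unfold T'; lia) ltac:(unfold T', M; lia)) as [_ HY].
    destruct (Hrec (S i) ltac:(unfold cnt in Hi; lia) T' ltac:(unfold T'; lia) ltac:(unfold T', M; lia)) as [HX _].
    replace (-N0 + Z.of_nat (S i))%Z with (-N0 + 1 + Z.of_nat i)%Z in HX by lia.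
    fold R in HX, HY.
    assert (B1 : R ^ S i * lam <= R ^ cnt * lam) by (apply Rmult_le_compat_r; auto; apply Rle_pow; auto; lia).
    assert (B2 : R ^ i * lam <= R ^ cnt * lam) by (apply Rmult_le_compat_r; auto; apply Rle_pow; auto; lia).
    assert (S1 : Cmod (Xf U p T' (-N0 + 1 + Z.of_nat i)) ^ 2 <= (R ^ cnt * lam) ^ 2)
      by (apply pow_incr; split; [apply Cmod_ge_0 | lra]).
    assert (S2 : Cmod (Yf U p T' (-N0 + 1 + Z.of_nat i)) ^ 2 <= (R ^ cnt * lam) ^ 2)
      by (apply pow_incr; split; [apply Cmod_ge_0 | lra]).
    rewrite Rpow_mult_distr in S1, S2. lra. }
  assert (HT' : En U N0 p (T + M) <= En U N0 p T') by (apply En_mono; auto; unfold T', M; lia).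
  unfold lam in HE'. rewrite pow2_sqrt in HE' by lra.
  apply (Rmult_le_reg_r (1 + Cst)); [lra|].
  replace (Cst / (1 + Cst) * En U N0 p T * (1 + Cst)) with (Cst * En U N0 p T) by (field; lra).
  nra.
Qed.

Open Scope R_scope.

Lemma pow_le_decr (s : R) (a b : nat) : 0 <= s <= 1 -> (a <= b)%nat -> s ^ b <= s ^ a.
Proof.
  intros Hs Hab. replace b with (a + (b - a))%nat by lia. rewrite pow_add.
  pose proof (pow_le s a ltac:(lra)).
  assert (s ^ (b - a) <= 1) by (rewrite <- (pow1 (b - a)); apply pow_incr; lra).
  assert (0 <= s ^ (b - a)) by (apply pow_le; lra). nra.
Qed.

Lemma geom_decay_series (f : nat -> R) (M : nat) (rho : R) :
  (0 < M)%nat -> 0 < rho < 1 -> (forall n, 0 <= f n) ->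
  (forall n, f (S n) <= f n) -> (forall T, f (T + M)%nat <= rho * f T) ->
  ex_series f.
Proof.
  intros HM Hrho Hpos Hdec Hstep.
  assert (Hmono : forall a b, (a <= b)%nat -> f b <= f a).
  { intros a b H. induction H; [lra|]. specialize (Hdec m). lra. }
  assert (Hk : forall k, f (M * k)%nat <= rho ^ k * f O).
  { induction k as [|k IH]. simpl. rewrite Nat.mul_0_r. lra.
    replace (M * S k)%nat with (M * k + M)%nat by lia. specialize (Hstep (M * k)%nat).
    simpl. pose proof (Hpos (M*k)%nat). nra. }
  set (s := Rpower rho (/ INR M)).
  assert (Hs0 : 0 < s) by (unfold s, Rpower; apply exp_pos).
  assert (HsM : s ^ M = rho).
  { unfold s. rewrite <- Rpower_pow by (unfold Rpower; apply exp_pos).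
    rewrite Rpower_mult. rewrite Rinv_l by (apply not_0_INR; lia). apply Rpower_1. lra. }
  assert (Hs1 : s < 1).
  { destruct (Rlt_le_dec s 1) as [H|H]; auto.
    assert (1 <= s ^ M) by (rewrite <- (pow1 M); apply pow_incr; lra). lra. }
  apply (@ex_series_le R_AbsRing R_CompleteNormedModule f (fun n => (f O / rho) * s ^ n)).
  - intros n. change (norm (f n)) with (Rabs (f n)). rewrite Rabs_pos_eq by auto.
    set (k := (n / M)%nat).
    assert (Hdiv := Nat.div_mod n M ltac:(lia)). assert (Hmod := Nat.mod_upper_bound n M ltac:(lia)).
    fold k in Hdiv.
    assert (H1 : f n <= rho ^ k * f O) by (eapply Rle_trans; [apply Hmono | apply Hk]; lia).
    assert (H2 : s ^ (M * S k) <= s ^ n) by (apply pow_le_decr; lra || lia).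
    rewrite pow_mult, HsM in H2. simpl in H2.
    assert (0 <= f O) by auto. pose proof (pow_le rho k ltac:(lra)).
    apply Rle_trans with (rho ^ k * f O); auto.
    unfold Rdiv. apply (Rmult_le_reg_r rho); [lra|].
    replace (f O * / rho * s ^ n * rho) with (f O * s ^ n) by (field; lra). nra.
  - apply (@ex_series_scal_l R_AbsRing R_NormedModule (f O / rho) (fun n => s ^ n)).
    apply ex_series_geom. rewrite Rabs_pos_eq; lra.
Qed.

Lemma sqrtE_series U N0 p : goodU U N0 -> (-N0 <= p <= N0)%Z ->
  ex_series (fun L => sqrt (En U N0 p L)).
Proof.
  intros G Hp. destruct (decay U N0 p G Hp) as [M [q [HM [Hq HT]]]].
  apply (geom_decay_series _ M (sqrt q)); auto.
  - split. apply sqrt_lt_R0; lra. rewrite <- sqrt_1. apply sqrt_lt_1; lra.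
  - intros; apply sqrt_pos.
  - intros n. apply sqrt_le_1_alt. apply En_mono; auto.
  - intros T. rewrite <- sqrt_mult by (lra || apply En_nonneg). apply sqrt_le_1_alt. auto.
Qed.

Lemma interior_bound U N0 p L m : goodU U N0 -> (-N0 + 1 <= m <= N0 - 1)%Z ->
  Cmod (Xf U p L m) <= sqrt (En U N0 p L) /\ Cmod (Yf U p L m) <= sqrt (En U N0 p L).
Proof.
  intros G Hm. pose proof G as [_ [HN _]].
  assert (H := sumZ_term (fun m => Cmod (Xf U p L m) ^ 2 + Cmod (Yf U p L m) ^ 2) (-N0 + 1)
            (cntN N0) (Z.to_nat (m - (-N0 + 1)))).
  replace (-N0 + 1 + Z.of_nat (Z.to_nat (m - (-N0 + 1))))%Z with m in H by lia.
  assert (H' : Cmod (Xf U p L m) ^ 2 + Cmod (Yf U p L m) ^ 2 <= En U N0 p L).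
  { apply H. intros m'. pose proof (pow2_ge_0 (Cmod (Xf U p L m'))). pose proof (pow2_ge_0 (Cmod (Yf U p L m'))). lra.
    unfold cntN. lia. }
  pose proof (pow2_ge_0 (Cmod (Xf U p L m))). pose proof (pow2_ge_0 (Cmod (Yf U p L m))).
  split; apply le_sqrt_of_sq; try apply Cmod_ge_0; lra.
Qed.

Lemma leak_bounds U N0 p L : goodU U N0 -> (-N0 <= p <= N0)%Z ->
  Cmod (Xf U p (S L) (-N0)) <= sqrt (En U N0 p L) /\ Cmod (Yf U p (S L) N0) <= sqrt (En U N0 p L).
Proof.
  intros G Hp. pose proof (En_nonneg U N0 p (S L)).
  split; apply le_sqrt_of_sq; try apply Cmod_ge_0.
  - pose proof (leak_X_le U N0 p L G Hp). lra.
  - pose proof (leak_Y_le U N0 p L G Hp). lra.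
Qed.

Open Scope C_scope.

Lemma Czero_series (f : nat -> C) l : is_series f l -> is_series (fun _ : nat => (0:C)) (0:C).
Proof.
  intros H. pose proof (Cis_series_lin f f l l 0 0 H H) as H2.
  replace (0 * l + 0 * l) with (0:C) in H2 by ring.
  eapply (@is_series_ext C_AbsRing C_NormedModule); [|exact H2]. intros n; simpl. ring.
Qed.

Definition XS U p n := Cser (fun L => Xf U p L n).
Definition YS U p n := Cser (fun L => Yf U p L n).

Definition convg U p n := ex_series (fun L => Xf U p L n) /\ ex_series (fun L => Yf U p L n).

Lemma eqX U p n : convg U p (n + 1)%Z ->
  is_series (fun L => Xf U p L n) (Xf U p 0 n + (ca U (n+1) * XS U p (n+1) + cb U (n+1) * YS U p (n+1))).
Proof.
  intros [H1 H2]. apply Cis_series_shift.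
  eapply (@is_series_ext C_AbsRing C_NormedModule); [|apply Cis_series_lin; apply Cser_spec; eauto].
  intros L. simpl. rewrite Xf_S. reflexivity.
Qed.

Lemma eqY U p n : convg U p (n - 1)%Z ->
  is_series (fun L => Yf U p L n) (Yf U p 0 n + (cc U (n-1) * XS U p (n-1) + ca U (n-1) * YS U p (n-1))).
Proof.
  intros [H1 H2]. apply Cis_series_shift.
  eapply (@is_series_ext C_AbsRing C_NormedModule); [|apply Cis_series_lin; apply Cser_spec; eauto].
  intros L. simpl. rewrite Yf_S. reflexivity.
Qed.

Lemma ex_of_is (f : nat -> C) l : is_series f l -> ex_series f.
Proof. intros H; exists l; auto. Qed.

Lemma conv_all U N0 p : goodU U N0 -> (-N0 <= p <= N0)%Z ->
  forall n, (-N0 - 1 <= n <= N0 + 1)%Z -> convg U p n.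
Proof.
  intros G Hp. pose proof G as [_ [HN _]].
  assert (Hint : forall m, (-N0 + 1 <= m <= N0 - 1)%Z -> convg U p m).
  { intros m Hm. split; eapply Cex_series_abs; try apply (sqrtE_series U N0 p G Hp);
    intros L; apply (interior_bound U N0 p L m G Hm). }
  assert (Z0 : is_series (fun _ : nat => (0:C)) (0:C)).
  { destruct (Hint 0%Z ltac:(lia)) as [[l Hl] _]. eapply Czero_series; eauto. }
  assert (XZ : forall m, (N0 <= m)%Z -> ex_series (fun L => Xf U p L m)).
  { intros m Hm. exists (0:C). eapply (@is_series_ext C_AbsRing C_NormedModule); [|exact Z0].
    intros L; simpl. rewrite X_vanish with (N0 := N0); auto. }
  assert (YZ : forall m, (m <= -N0)%Z -> ex_series (fun L => Yf U p L m)).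
  { intros m Hm. exists (0:C). eapply (@is_series_ext C_AbsRing C_NormedModule); [|exact Z0].
    intros L; simpl. rewrite Y_vanish with (N0 := N0); auto. }
  assert (Cm : convg U p (-N0)).
  { split; [|apply YZ; lia]. eapply ex_of_is. apply eqX. apply Hint. lia. }
  assert (Cp : convg U p N0).
  { split; [apply XZ; lia|]. eapply ex_of_is. apply eqY. apply Hint. lia. }
  assert (Cm1 : convg U p (-N0 - 1)).
  { split; [|apply YZ; lia]. eapply ex_of_is. apply eqX. replace (-N0 - 1 + 1)%Z with (-N0)%Z by lia. auto. }
  assert (Cp1 : convg U p (N0 + 1)).
  { split; [apply XZ; lia|]. eapply ex_of_is. apply eqY. replace (N0 + 1 - 1)%Z with N0 by lia. auto. }
  intros n Hn.
  destruct (Z.eq_dec n (-N0 - 1)) as [->|]; auto.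
  destruct (Z.eq_dec n (-N0)) as [->|]; auto.
  destruct (Z.eq_dec n N0) as [->|]; auto.
  destruct (Z.eq_dec n (N0 + 1)) as [->|]; auto.
  apply Hint; lia.
Qed.

Lemma XS_eq U N0 p n : goodU U N0 -> (-N0 <= p <= N0)%Z -> (-N0 - 1 <= n <= N0)%Z ->
  XS U p n = Xf U p 0 n + (ca U (n+1) * XS U p (n+1) + cb U (n+1) * YS U p (n+1)).
Proof. intros G Hp Hn. unfold XS at 1. apply Cser_eq. apply eqX. apply (conv_all U N0 p G Hp). lia. Qed.

Lemma YS_eq U N0 p n : goodU U N0 -> (-N0 <= p <= N0)%Z -> (-N0 <= n <= N0 + 1)%Z ->
  YS U p n = Yf U p 0 n + (cc U (n-1) * XS U p (n-1) + ca U (n-1) * YS U p (n-1)).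
Proof. intros G Hp Hn. unfold YS at 1. apply Cser_eq. apply eqY. apply (conv_all U N0 p G Hp). lia. Qed.

Lemma XS_right U N0 p : goodU U N0 -> (-N0 <= p <= N0)%Z -> XS U p N0 = 0.
Proof.
  intros G Hp. pose proof G as [_ [HN _]]. unfold XS. apply Cser_eq.
  destruct (conv_all U N0 p G Hp 0%Z ltac:(lia)) as [[l Hl] _].
  eapply (@is_series_ext C_AbsRing C_NormedModule); [|eapply Czero_series; eauto].
  intros L; simpl. rewrite X_vanish with (N0 := N0); auto. lia.
Qed.

Lemma YS_left U N0 p : goodU U N0 -> (-N0 <= p <= N0)%Z -> YS U p (-N0) = 0.
Proof.
  intros G Hp. pose proof G as [_ [HN _]]. unfold YS. apply Cser_eq.
  destruct (conv_all U N0 p G Hp 0%Z ltac:(lia)) as [[l Hl] _].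
  eapply (@is_series_ext C_AbsRing C_NormedModule); [|eapply Czero_series; eauto].
  intros L; simpl. rewrite Y_vanish with (N0 := N0); auto. lia.
Qed.

Definition tser U p q (n : nat) : C := Xf U p (S n) q + Yf U p (S n) q.

Lemma tser_is U N0 p q : goodU U N0 -> (-N0 <= p <= N0)%Z -> (q = -N0 \/ q = N0)%Z ->
  is_series (tser U p q) (XS U p q + YS U p q - Xf U p 0 q - Yf U p 0 q).
Proof.
  intros G Hp Hq. pose proof G as [_ [HN _]].
  destruct (conv_all U N0 p G Hp q ltac:(lia)) as [H1 H2].
  pose proof (Cis_series_lin _ _ _ _ 1 1 (Cser_spec _ H1) (Cser_spec _ H2)) as H.
  assert (H' : is_series (fun n => 1 * Xf U p n q + 1 * Yf U p n q) ((XS U p q + YS U p q - Xf U p 0 q - Yf U p 0 q) + (1 * Xf U p 0 q + 1 * Yf U p 0 q))).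
  { replace ((XS U p q + YS U p q - Xf U p 0 q - Yf U p 0 q) + (1 * Xf U p 0 q + 1 * Yf U p 0 q)) with
      (1 * Cser (fun L => Xf U p L q) + 1 * Cser (fun L => Yf U p L q)) by (unfold XS, YS; ring). exact H. }
  apply (@is_series_incr_1 C_AbsRing C_NormedModule) in H'.
  eapply (@is_series_ext C_AbsRing C_NormedModule); [|exact H'].
  intros n; unfold tser; simpl. ring.
Qed.

Lemma tser_abs U N0 p q : goodU U N0 -> (-N0 <= p <= N0)%Z -> (q = -N0 \/ q = N0)%Z ->
  ex_series (fun n => Cmod (tser U p q n)).
Proof.
  intros G Hp Hq. pose proof G as [_ [HN _]].
  apply (@ex_series_le R_AbsRing R_CompleteNormedModule _ (fun n => 2 * sqrt (En U N0 p n))%R).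
  - intros n. change (norm (Cmod (tser U p q n))) with (Rabs (Cmod (tser U p q n))).
    rewrite Rabs_pos_eq by apply Cmod_ge_0. unfold tser.
    eapply Rle_trans; [apply Cmod_triangle|].
    destruct (leak_bounds U N0 p n G Hp) as [B1 B2].
    pose proof (sqrt_pos (En U N0 p n)).
    destruct Hq as [->| ->].
    + rewrite (Y_vanish U N0 p (S n) (-N0)) by (auto; lia). rewrite Cmod_0. lra.
    + rewrite (X_vanish U N0 p (S n) N0) by (auto; lia). rewrite Cmod_0. lra.
  - apply (@ex_series_scal_l R_AbsRing R_NormedModule 2 (fun n => sqrt (En U N0 p n))).
    apply sqrtE_series; auto.
Qed.

Open Scope C_scope.

Lemma Cmult_reg (a x : C) : a <> 0 -> a * x = 0 -> x = 0.
Proof. intros Ha H. replace x with (/ a * (a * x)) by (field; auto). rewrite H. ring. Qed.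

Definition loc_eqs U N0 (d1 d2 : Z -> C) : Prop :=
  forall n, (-N0 <= n <= N0)%Z ->
    d1 n = ca U (n+1) * d1 (n+1)%Z + cb U (n+1) * d2 (n+1)%Z /\
    d2 n = cc U (n-1) * d1 (n-1)%Z + ca U (n-1) * d2 (n-1)%Z.

Lemma uniq_up U N0 d1 d2 : goodU U N0 -> loc_eqs U N0 d1 d2 ->
  d1 (-N0)%Z = 0 -> d2 (-N0)%Z = 0 -> d1 N0 = 0 /\ d2 N0 = 0.
Proof.
  intros G H H1 H2. pose proof G as [_ [HN _]].
  assert (K : forall k : nat, (Z.of_nat k <= 2 * N0)%Z -> d1 (-N0 + Z.of_nat k)%Z = 0 /\ d2 (-N0 + Z.of_nat k)%Z = 0).
  { induction k as [|x IH]; intros Hx2.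
    - rewrite Z.add_0_r. auto.
    - destruct (IH ltac:(lia)) as [IH1 IH2].
      set (m := (-N0 + Z.of_nat x)%Z) in *.
      destruct (H (m + 1)%Z ltac:(unfold m; lia)) as [_ Ey].
      destruct (H m ltac:(unfold m; lia)) as [Ex _].
      replace (m + 1 - 1)%Z with m in Ey by lia.
      rewrite IH1, IH2 in Ey. replace (-N0 + Z.of_nat (S x))%Z with (m + 1)%Z by (unfold m; lia).
      assert (E2 : d2 (m + 1)%Z = 0) by (rewrite Ey; ring).
      split; auto. rewrite IH1, E2 in Ex. apply (Cmult_reg (ca U (m+1))).
      apply (unit_coefs U N0 (m+1) G). rewrite Ex. ring. }
  destruct (K (Z.to_nat (2 * N0)) ltac:(lia)) as [A B].
  replace (-N0 + Z.of_nat (Z.to_nat (2 * N0)))%Z with N0 in A, B by lia. auto.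
Qed.

Lemma uniq_down U N0 d1 d2 : goodU U N0 -> loc_eqs U N0 d1 d2 ->
  d1 N0 = 0 -> d2 N0 = 0 -> d1 (-N0)%Z = 0 /\ d2 (-N0)%Z = 0.
Proof.
  intros G H H1 H2. pose proof G as [_ [HN _]].
  assert (K : forall k : nat, (Z.of_nat k <= 2 * N0)%Z -> d1 (N0 - Z.of_nat k)%Z = 0 /\ d2 (N0 - Z.of_nat k)%Z = 0).
  { induction k as [|x IH]; intros Hx2.
    - rewrite Z.sub_0_r. auto.
    - destruct (IH ltac:(lia)) as [IH1 IH2].
      set (m := (N0 - Z.of_nat x)%Z) in *.
      destruct (H (m - 1)%Z ltac:(unfold m; lia)) as [Ex _].
      destruct (H m ltac:(unfold m; lia)) as [_ Ey].
      replace (m - 1 + 1)%Z with m in Ex by lia.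
      rewrite IH1, IH2 in Ex. replace (N0 - Z.of_nat (S x))%Z with (m - 1)%Z by (unfold m; lia).
      assert (E1 : d1 (m - 1)%Z = 0) by (rewrite Ex; ring).
      split; auto. rewrite IH2, E1 in Ey. apply (Cmult_reg (ca U (m-1))).
      apply (unit_coefs U N0 (m-1) G). rewrite Ey. ring. }
  destruct (K (Z.to_nat (2 * N0)) ltac:(lia)) as [A B].
  replace (N0 - Z.of_nat (Z.to_nat (2 * N0)))%Z with (-N0)%Z in A, B by lia. auto.
Qed.

Lemma stat_comp U N0 (P : Z -> vec2) : goodU U N0 -> (forall n, evol U P n = P n) ->
  forall n, fst (P n) = ca U (n+1) * fst (P (n+1)%Z) + cb U (n+1) * snd (P (n+1)%Z) /\
            snd (P n) = cc U (n-1) * fst (P (n-1)%Z) + ca U (n-1) * snd (P (n-1)%Z).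
Proof.
  intros G H n. specialize (H n). destruct (unit_coefs U N0 (n-1) G) as [_ [_ [_ [Hd _]]]].
  split; [apply (f_equal fst) in H | apply (f_equal snd) in H]; rewrite <- H;
  unfold evol, vadd, mulmv, Pm, Qm, ca, cb, cc in *; simpl; rewrite ?Hd; ring.
Qed.

Lemma loc_eqs_lin U N0 (a1 a2 b1 b2 : Z -> C) (t : C) :
  loc_eqs U N0 a1 a2 -> loc_eqs U N0 b1 b2 ->
  loc_eqs U N0 (fun n => a1 n - t * b1 n) (fun n => a2 n - t * b2 n).
Proof.
  intros Ha Hb n Hn. destruct (Ha n Hn) as [A1 A2]. destruct (Hb n Hn) as [B1 B2].
  rewrite A1, A2, B1, B2. split; ring.
Qed.

Lemma loc_eqs_stat U N0 P : goodU U N0 -> stationary U P ->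
  loc_eqs U N0 (fun n => fst (P n)) (fun n => snd (P n)).
Proof. intros G [_ H] n _. apply (stat_comp U N0 P G H). Qed.

Definition Psi1p U N0 n := XS U N0 n + (if Z.leb N0 n then 1 else 0).
Definition Psi2p U N0 n := YS U N0 n - (if Z.leb (N0 + 1) n then 1 else 0).

Lemma psi_p_eqs U N0 : goodU U N0 -> loc_eqs U N0 (Psi1p U N0) (Psi2p U N0).
Proof.
  intros G n Hn. pose proof G as [_ [HN _]].
  assert (Hp : (-N0 <= N0 <= N0)%Z) by lia.
  unfold Psi1p, Psi2p. split.
  - rewrite (XS_eq U N0 N0 n G Hp) by lia. rewrite Xf_0.
    destruct (Z.le_gt_cases N0 (n + 1)) as [Hc|Hc].
    + destruct (id_coefs U N0 (n+1) G ltac:(lia)) as [Ha [Hb _]]. rewrite Ha, Hb.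
      destruct (Z.leb_spec N0 n); destruct (Z.leb_spec N0 (n+1)); destruct (Z.leb_spec (N0+1) (n+1));
      destruct (Z.eqb_spec n (N0 - 1)); try lia; ring.
    + destruct (Z.leb_spec N0 n); destruct (Z.leb_spec N0 (n+1)); destruct (Z.leb_spec (N0+1) (n+1));
      destruct (Z.eqb_spec n (N0 - 1)); try lia; ring.
  - rewrite (YS_eq U N0 N0 n G Hp) by lia. rewrite Yf_0.
    destruct (Z.leb_spec (N0+1) n); destruct (Z.leb_spec N0 (n-1)); destruct (Z.leb_spec (N0+1) (n-1));
      destruct (Z.eqb_spec n (N0 + 1)); try lia; ring.
Qed.

Definition Psi1m U N0 n := XS U (-N0) n - (if Z.leb n (-N0 - 1) then 1 else 0).
Definition Psi2m U N0 n := YS U (-N0) n + (if Z.leb n (-N0) then 1 else 0).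

Lemma psi_m_eqs U N0 : goodU U N0 -> loc_eqs U N0 (Psi1m U N0) (Psi2m U N0).
Proof.
  intros G n Hn. pose proof G as [_ [HN _]].
  assert (Hp : (-N0 <= -N0 <= N0)%Z) by lia.
  unfold Psi1m, Psi2m. split.
  - rewrite (XS_eq U N0 (-N0) n G Hp) by lia. rewrite Xf_0.
    destruct (Z.leb_spec n (-N0-1)); destruct (Z.leb_spec (n+1) (-N0-1)); destruct (Z.leb_spec (n+1) (-N0));
      destruct (Z.eqb_spec n (-N0 - 1)); try lia; ring.
  - rewrite (YS_eq U N0 (-N0) n G Hp) by lia. rewrite Yf_0.
    destruct (Z.le_gt_cases (n - 1) (-N0)) as [Hc|Hc].
    + destruct (id_coefs U N0 (n-1) G ltac:(lia)) as [Ha [_ Hcc]]. rewrite Ha, Hcc.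
      destruct (Z.leb_spec n (-N0)); destruct (Z.leb_spec (n-1) (-N0-1)); destruct (Z.leb_spec (n-1) (-N0));
      destruct (Z.eqb_spec n (-N0 + 1)); try lia; ring.
    + destruct (Z.leb_spec n (-N0)); destruct (Z.leb_spec (n-1) (-N0-1)); destruct (Z.leb_spec (n-1) (-N0));
      destruct (Z.eqb_spec n (-N0 + 1)); try lia; ring.
Qed.

Open Scope C_scope.

Lemma Xf0_end U N0 p : (1 <= N0)%Z -> (p = N0 \/ p = -N0)%Z -> Xf U p 0 N0 = 0 /\ Xf U p 0 (-N0) = 0.
Proof. intros HN Hp. rewrite !Xf_0. destruct (Z.eqb_spec N0 (p-1)); destruct (Z.eqb_spec (-N0) (p-1)); try lia; auto. Qed.
Lemma Yf0_end U N0 p : (1 <= N0)%Z -> (p = N0 \/ p = -N0)%Z -> Yf U p 0 N0 = 0 /\ Yf U p 0 (-N0) = 0.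
Proof. intros HN Hp. rewrite !Yf_0. destruct (Z.eqb_spec N0 (p+1)); destruct (Z.eqb_spec (-N0) (p+1)); try lia; auto. Qed.

Theorem mainTheorem1 :
  forall (U : Z -> mat2) (N0 : Z) (S : mat2),
    (forall n : Z, in_S (U n)) ->
    (1 <= N0)%Z ->
    (forall n : Z, (N0 <= Z.abs n)%Z -> is_id2 (U n)) ->
    is_scattering_matrix U N0 S ->
    forall j k : nat, inI2 j -> inI2 k ->
    (* t n is the inner sum for L = n + 1 *)
    exists t : nat -> C,
      (forall n : nat,
         exists l : list (list arc),
           NoDup l /\
           (forall g, In g l <-> (in_G N0 j k g /\ walk_length g = Datatypes.S n)) /\
           t n = Csum (map (Phi U) l)) /\
      ex_series (fun n => Cmod (t n)) /\
      exists s : C, is_series t s /\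
        S j k = RtoC ((-1) ^ (j + k)) * s.
Proof.
  intros U N0 S HS HN Hid Hsc j k Hj Hk.
  assert (G : goodU U N0) by (split; auto).
  set (p := ((-1) ^ (Z.of_nat k - 1) * N0)%Z).
  set (q := ((-1) ^ (Z.of_nat j) * N0)%Z).
  assert (P1 : ((-1) ^ (Z.of_nat 1 - 1) = 1)%Z) by reflexivity.
  assert (P2 : ((-1) ^ (Z.of_nat 2 - 1) = -1)%Z) by reflexivity.
  assert (Q1 : ((-1) ^ (Z.of_nat 1) = -1)%Z) by reflexivity.
  assert (Q2 : ((-1) ^ (Z.of_nat 2) = 1)%Z) by reflexivity.
  assert (Hp : (p = N0 \/ p = -N0)%Z) by (unfold p; destruct Hk as [-> | ->]; [rewrite P1 | rewrite P2]; lia).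
  assert (Hq : (q = -N0 \/ q = N0)%Z) by (unfold q; destruct Hj as [-> | ->]; [rewrite Q1 | rewrite Q2]; lia).
  assert (Hp' : (-N0 <= p <= N0)%Z) by lia.
  exists (tser U p q). split; [|split].
  - intros n. exists (wlist p q (Datatypes.S n)). split; [apply wlist_NoDup|]. split.
    + intros g. rewrite wlist_spec. unfold in_G. fold p q. tauto.
    + rewrite wlist_sum. reflexivity.
  - apply (tser_abs U N0); auto.
  - exists (XS U p q + YS U p q - Xf U p 0 q - Yf U p 0 q). split; [apply (tser_is U N0); auto|].
    destruct (Xf0_end U N0 p HN Hp) as [X1 X2]. destruct (Yf0_end U N0 p HN Hp) as [Y1 Y2].
    destruct Hsc as [Pip [Pim [Pop [Pom [s1 [s2 [s3 [s4 [e1 [e2 [e3 [e4 [r1 r2]]]]]]]]]]]]].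
    destruct Hk as [Ek | Ek]; subst k.
    +
      assert (Ep : p = N0) by (unfold p; rewrite P1; lia). rewrite Ep in *.
      set (tau := XS U N0 (-N0)%Z).
      assert (Hd := uniq_up U N0 (fun n => Psi1p U N0 n - tau * fst (Pom n))
                                  (fun n => Psi2p U N0 n - tau * snd (Pom n)) G
               (loc_eqs_lin _ _ _ _ _ _ _ (psi_p_eqs U N0 G) (loc_eqs_stat U N0 Pom G s4))).
      simpl in Hd. unfold Psi1p, Psi2p in Hd. rewrite e2 in Hd. simpl in Hd.
      rewrite (YS_left U N0 N0 G Hp'), (XS_right U N0 N0 G Hp') in Hd.
      destruct (Z.leb_spec N0 (-N0)); [lia|]. destruct (Z.leb_spec (N0+1) (-N0)); [lia|].
      destruct (Z.leb_spec N0 N0); [|lia]. destruct (Z.leb_spec (N0+1) N0); [lia|].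
      destruct Hd as [D1 D2]; [unfold tau; ring | ring |].
      pose proof (r1 N0) as R1. rewrite e3, e4 in R1. unfold vadd, vscal in R1.
      destruct (Pom N0) as [pp qq].
      pose proof (f_equal (@fst C C) R1) as R1a. pose proof (f_equal (@snd C C) R1) as R1b.
      cbn [fst snd] in *.
      assert (A1 : tau * pp = 1) by (transitivity (tau * pp + (0 + 1 - tau * pp)); [rewrite D1 |]; ring).
      assert (A2 : YS U N0 N0 = tau * qq) by (transitivity (tau * qq + (YS U N0 N0 - 0 - tau * qq)); [ring | rewrite D2; ring]).
      assert (B1 : S 1%nat 1%nat * pp = 1) by (rewrite R1a; ring).
      assert (HS11 : S 1%nat 1%nat = tau).
      { transitivity (S 1%nat 1%nat * (tau * pp)); [rewrite A1; ring|].
        transitivity (tau * (S 1%nat 1%nat * pp)); [ring | rewrite B1; ring]. }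
      assert (HS21 : S 2%nat 1%nat = - YS U N0 N0).
      { rewrite A2. transitivity (S 2%nat 1%nat + (S 1%nat 1%nat * qq + S 2%nat 1%nat * 1) - S 1%nat 1%nat * qq - S 2%nat 1%nat); [ring|].
        rewrite <- R1b, HS11. ring. }
      destruct Hj as [Ej | Ej]; subst j.
      * assert (Eq : q = (-N0)%Z) by (unfold q; rewrite Q1; lia). rewrite Eq in *.
        rewrite X2, Y2, (YS_left U N0 N0 G Hp'), HS11.
        replace ((-1) ^ (1 + 1))%R with 1%R by (simpl; ring). unfold tau. ring.
      * assert (Eq : q = N0) by (unfold q; rewrite Q2; lia). rewrite Eq in *.
        rewrite X1, Y1, (XS_right U N0 N0 G Hp'), HS21.
        replace ((-1) ^ (2 + 1))%R with (- (1))%R by (simpl; ring). rewrite RtoC_opp. ring.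
    +
      assert (Ep : p = (-N0)%Z) by (unfold p; rewrite P2; lia). rewrite Ep in *.
      set (tau := YS U (-N0) N0).
      assert (Hd := uniq_down U N0 (fun n => Psi1m U N0 n - tau * fst (Pop n))
                                  (fun n => Psi2m U N0 n - tau * snd (Pop n)) G
               (loc_eqs_lin _ _ _ _ _ _ _ (psi_m_eqs U N0 G) (loc_eqs_stat U N0 Pop G s3))).
      simpl in Hd. unfold Psi1m, Psi2m in Hd. rewrite e4 in Hd. simpl in Hd.
      rewrite (YS_left U N0 (-N0) G Hp'), (XS_right U N0 (-N0) G Hp') in Hd.
      destruct (Z.leb_spec N0 (-N0 - 1)); [lia|]. destruct (Z.leb_spec N0 (-N0)); [lia|].
      destruct (Z.leb_spec (-N0) (-N0 - 1)); [lia|]. destruct (Z.leb_spec (-N0) (-N0)); [|lia].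
      destruct Hd as [D1 D2]; [ring | unfold tau; ring |].
      pose proof (r2 (-N0)%Z) as R2. rewrite e1, e2 in R2. unfold vadd, vscal in R2.
      destruct (Pop (-N0)%Z) as [uu vv].
      pose proof (f_equal (@fst C C) R2) as R2a. pose proof (f_equal (@snd C C) R2) as R2b.
      cbn [fst snd] in *.
      assert (A1 : tau * vv = 1) by (transitivity (tau * vv + (0 + 1 - tau * vv)); [rewrite D2 |]; ring).
      assert (A2 : XS U (-N0) (-N0) = tau * uu) by (transitivity (tau * uu + (XS U (-N0) (-N0) - 0 - tau * uu)); [ring | rewrite D1; ring]).
      assert (B1 : S 2%nat 2%nat * vv = 1) by (rewrite R2b; ring).
      assert (HS22 : S 2%nat 2%nat = tau).
      { transitivity (S 2%nat 2%nat * (tau * vv)); [rewrite A1; ring|].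
        transitivity (tau * (S 2%nat 2%nat * vv)); [ring | rewrite B1; ring]. }
      assert (HS12 : S 1%nat 2%nat = - XS U (-N0) (-N0)).
      { rewrite A2. transitivity (S 1%nat 2%nat + (S 1%nat 2%nat * 1 + S 2%nat 2%nat * uu) - S 1%nat 2%nat - S 2%nat 2%nat * uu); [ring|].
        rewrite <- R2a, HS22. ring. }
      destruct Hj as [Ej | Ej]; subst j.
      * assert (Eq : q = (-N0)%Z) by (unfold q; rewrite Q1; lia). rewrite Eq in *.
        rewrite X2, Y2, (YS_left U N0 (-N0) G Hp'), HS12.
        replace ((-1) ^ (1 + 2))%R with (- (1))%R by (simpl; ring). rewrite RtoC_opp. ring.
      * assert (Eq : q = N0) by (unfold q; rewrite Q2; lia). rewrite Eq in *.
        rewrite X1, Y1, (XS_right U N0 (-N0) G Hp'), HS22.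
        replace ((-1) ^ (2 + 2))%R with 1%R by (simpl; ring). unfold tau. ring.
Qed.
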